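(* Let $q$ be a prime power, $l\ge1$, $t=q^l$, $G_1(x)=x^{t-1}+1$, $G_2(x)=x^t+x$, and $L_1^*=\{\alpha\in GF(t^2):\ \alpha\neq0,\ G_1(\alpha)\ne0\}$. Then the $q$-ary Goppa codes $\Gamma_2^{(q-1)}=\Gamma(L_1^*,G_2^{q-1})$ and $\Gamma_1^{*(q-1)}=\Gamma(L_1^*,G_1^{q-1})$ have equal parity-check matrices, i.e., they coincide as codes.
   Context: For a set $L=\{\alpha_1,\dots,\alpha_n\}$ of distinct elements of $GF(t^2)$ and $P\in GF(t^2)[x]$ with $P(\alpha_k)\neq0$ for all $k$, the $q$-ary Goppa code is $\Gamma(L,P)=\{c\in GF(q)^n:\ \sum_k c_k\alpha_k^s/P(\alpha_k)=0 \text{ for } s=0,\dots,\deg P-1\}$. *)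

(* Defs.v *)
From HB Require Import structures.
From mathcomp Require Import all_boot all_order all_algebra all_field.
Set Implicit Arguments. Unset Strict Implicit. Unset Printing Implicit Defensive.
Import GRing.Theory.
Local Open Scope ring_scope.

(* Membership in the q-ary Goppa code Gamma(L,P), where the locator set
   L = [alpha_1; ...; alpha_n] is a sequence of distinct elements of the
   field F (= GF(t^2)), and GF(q) is the subfield {x in F | x^q = x}. *)
Definition in_goppa (F : fieldType) (q : nat) (L : seq F) (P : {poly F})
    (c : seq F) : bool :=
  [&& size c == size L,
      all (fun a => a ^+ q == a) c &
      [forall s : 'I_(size P).-1,
         \sum_(k < size L) c`_k * L`_k ^+ s / P.[L`_k] == 0]].

Definition G1 (F : fieldType) (t : nat) : {poly F} := 'X^(t.-1) + 1.
Definition G2 (F : fieldType) (t : nat) : {poly F} := 'X^t + 'X.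

(* Main.v *)
Require Import Defs.
From HB Require Import structures.
From mathcomp Require Import all_boot all_order all_algebra all_field.
From mathcomp Require Import ring zify.
Import GRing.Theory.
Local Open Scope ring_scope.


Lemma frobD (F : fieldType) (q : nat)
  (Hq : forall x y : F, (x + y) ^+ q = x ^+ q + y ^+ q) (m : nat) (x y : F) :
  (x + y) ^+ (q ^ m) = x ^+ (q ^ m) + y ^+ (q ^ m).
Proof.
elim: m => [|m IH]; first by rewrite !expn0 !expr1.
by rewrite expnSr !exprM IH Hq.
Qed.

Lemma frob_sum (F : fieldType) (q : nat) (q0 : (0 < q)%N)
  (Hq : forall x y : F, (x + y) ^+ q = x ^+ q + y ^+ q) (m n : nat) (f : 'I_n -> F) :
  (\sum_(i < n) f i) ^+ (q ^ m) = \sum_(i < n) f i ^+ (q ^ m).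
Proof.
apply: (big_morph (fun x => x ^+ (q ^ m))).
  by move=> x y; apply: frobD.
by rewrite expr0n expn_eq0 eqn0Ngt q0.
Qed.

Lemma fixpow (F : fieldType) (q : nat) (c : F) : c ^+ q = c -> forall m, c ^+ (q ^ m) = c.
Proof.
move=> H; elim=> [|m IH]; first by rewrite expn0 expr1.
by rewrite expnSr exprM IH H.
Qed.

Section Elt.
Variables (F : fieldType) (q l : nat) (a : F).
Hypothesis Hq : forall x y : F, (x + y) ^+ q = x ^+ q + y ^+ q.
Hypothesis q1 : (1 < q)%N.
Hypothesis l1 : (0 < l)%N.
Hypothesis a0 : a != 0.
Let t := (q ^ l)%N.
Let E := q.-1.
Hypothesis at2 : a ^+ (t * t) = a.
Let g := a ^+ t.-1 + 1.
Hypothesis g0 : g != 0.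

Lemma t_gt : (q <= t)%N.
Proof. by rewrite /t -{1}(expn1 q) leq_pexp2l // ltnW. Qed.

Lemma aT : a ^+ t + a = a * g.
Proof.
have t0 : (0 < t)%N by rewrite /t expn_gt0 (ltnW q1).
by rewrite /g mulrDr mulr1 -exprS prednK.
Qed.

Lemma T0 : a * g != 0. Proof. by rewrite mulf_neq0. Qed.

Lemma a_unit : a ^+ (t * t).-1 = 1.
Proof.
have t0 : (0 < t * t)%N by rewrite muln_gt0 /t expn_gt0 (ltnW q1).
apply: (mulfI a0); rewrite mulr1 -exprS prednK //.
Qed.

Lemma gt : g ^+ t * a ^+ t.-1 = g.
Proof.
rewrite /g /t frobD // -/t expr1n -exprM mulrDl mul1r -exprD.
have t0 : (0 < t)%N by rewrite /t expn_gt0 (ltnW q1).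
have -> : (t.-1 * t + t.-1 = (t * t).-1)%N.
  rewrite -{2 4}(prednK t0); nia.
by rewrite a_unit addrC.
Qed.

Lemma factA (s : nat) : (0 < s)%N -> (s < E)%N ->
  (a ^+ (E * t.-1 - t * (E - s)) / g ^+ E) ^+ t = a ^+ s / (a ^+ t + a) ^+ E.
Proof.
move=> s0 sE.
have Et : (E < t)%N by apply: leq_trans t_gt; rewrite /E prednK // ltnW.
have t0 : (0 < t)%N by rewrite /t expn_gt0 (ltnW q1).
set j := (E * t.-1 - t * (E - s))%N.
have jE : (j * t + t * E = t * t * s)%N.
  rewrite /j; rewrite -{1 2 5 6}(prednK t0); nia.
rewrite aT expr_div_n -exprM -{2}gt exprMn exprMn.
have Gt0 : g ^+ t != 0 by rewrite expf_neq0.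
have u0 : a ^+ t.-1 != 0 by rewrite expf_neq0.
apply/eqP; rewrite eqr_div ?mulf_neq0 ?expf_neq0 //; apply/eqP.
rewrite -!exprM.
have aE : a ^+ (t * E) = a ^+ E * a ^+ (t.-1 * E).
  by rewrite -exprD -{1}(prednK t0) mulSn.
have -> : a ^+ (j * t) * (a ^+ E * (g ^+ (t * E) * a ^+ (t.-1 * E)))
   = (a ^+ (j * t + t * E)) * g ^+ (t * E).
  by rewrite exprD aE; ring.
by rewrite jE exprM at2 [(E * t)%N]mulnC.
Qed.

Lemma factB : let h := a ^+ (q ^ l.-1).-1 / g in
  (h + h ^+ t) ^+ q = 1 / (a ^+ t + a) ^+ E.
Proof.
move=> h.
set T := a * g.
have Tt : T ^+ t = T.
  by rewrite /T -aT /t frobD // -/t -exprM at2 addrC.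
set Q := (q ^ l.-1)%N.
have Q0 : (0 < Q)%N by rewrite /Q expn_gt0 (ltnW q1).
have hE : h = a ^+ Q / T.
  rewrite /h /T -[in RHS](prednK Q0) exprS; field; apply/andP; split => //.
have hsum : h + h ^+ t = T ^+ Q / T.

  rewrite hE expr_div_n Tt -mulrDl; congr (_ / _).
  rewrite /T -aT /Q frobD // -/Q -!exprM mulnC addrC //.
rewrite hsum aT -/T expr_div_n -exprM.
have -> : (Q * q = t)%N by rewrite /Q /t -expnSr prednK.
rewrite Tt /E -{1}(prednK (ltnW q1)) exprS.
have : T != 0 by apply: T0.
move=> Tn; field; rewrite Tn expf_neq0 //.
Qed.
End Elt.

Lemma poly_cond (F : fieldType) (n N : nat) (c a d : nat -> F) :
  (forall s, (s < N)%N -> \sum_(k < n) c k * a k ^+ s / d k = 0) ->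
  forall r : {poly F}, (size r <= N)%N ->
  \sum_(k < n) c k * r.[a k] / d k = 0.
Proof.
move=> H r Hr.
under eq_bigr => k _ do rewrite (horner_coef_wide _ Hr) mulr_sumr mulr_suml.
rewrite exchange_big /= big1 // => i _.
have := H i (ltn_ord i).
under eq_bigr => k _ do rewrite mulrCA -mulrA.
by rewrite -mulr_sumr => ->; rewrite mulr0.
Qed.

Theorem lemma5 (p k l : nat) (F : finFieldType) (L : seq F) :
  prime p -> (0 < k)%N -> (1 <= l)%N ->
  #|F| = (((p ^ k) ^ l) ^ 2)%N ->
  uniq L ->
  (forall a : F, (a \in L) = (a != 0) && ((G1 F ((p ^ k) ^ l)%N).[a] != 0)) ->
  forall c : seq F,
    in_goppa (p ^ k)%N L ((G2 F ((p ^ k) ^ l)%N) ^+ (p ^ k).-1) c =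
    in_goppa (p ^ k)%N L ((G1 F ((p ^ k) ^ l)%N) ^+ (p ^ k).-1) c.
Proof.
move=> pp k0 l1 card _ hL c.
have pF : p \in [pchar F].
  have cF : #|F| = (p ^ (k * l * 2))%N by rewrite card !expnM.
  exact: (card_finPcharP cF pp).
set q := (p ^ k)%N.
have q1 : (1 < q)%N.
  by rewrite /q -{1}(expn0 p) ltn_exp2l ?prime_gt1.
have tq : (q <= q ^ l)%N by rewrite -{1}(expn1 q) leq_pexp2l // ltnW.
have Hq : forall x y : F, (x + y) ^+ q = x ^+ q + y ^+ q.
  move=> x y; apply: exprDn_pchar.
  by rewrite (eq_pnat _ (pcharf_eq pF)) pnatX pnat_id.
have at2 : forall a : F, a ^+ (q ^ l * q ^ l) = a.
  by move=> a; rewrite mulnn -card expf_card.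
set t := (q ^ l)%N in tq at2 *.
set E := q.-1.
have sG2 : (size (G2 F t ^+ E)).-1 = (t * E)%N.
  by rewrite size_exp /G2 size_polyDl ?size_polyXn ?size_polyX //; lia.
have sG1 : (size (G1 F t ^+ E)).-1 = (t.-1 * E)%N.
  rewrite size_exp /G1 size_polyDl ?size_polyXn ?size_poly1 //; lia.
have hG2 : forall x, (G2 F t ^+ E).[x] = (x ^+ t + x) ^+ E.
  by move=> x; rewrite horner_exp /G2 hornerD hornerXn hornerX.
have hG1 : forall x, (G1 F t ^+ E).[x] = (x ^+ t.-1 + 1) ^+ E.
  by move=> x; rewrite horner_exp /G1 hornerD hornerXn hornerC.
rewrite /in_goppa sG2 sG1.
case Hs: (size c == size L) => //=.
case Hall: (all _ c) => //=.
move/eqP: Hs => Hs.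
have cq : forall i, (i < size L)%N -> c`_i ^+ q = c`_i.
  by move=> i Hi; apply/eqP; apply: (all_nthP 0 Hall); rewrite Hs.
have aL : forall i, (i < size L)%N -> L`_i != 0 /\ L`_i ^+ t.-1 + 1 != 0.
  move=> i Hi; have := hL L`_i; rewrite mem_nth // => /esym/andP [].
  by rewrite /G1 hornerD hornerXn hornerC.
have E0 : (0 < E)%N by rewrite /E -ltnS prednK // ltnW.
have t0 : (0 < t)%N by apply: leq_trans tq; apply: ltnW.
apply/idP/idP => /forallP H; apply/forallP => s; apply/eqP.
  have Hs2 : (s + E < t * E)%N.
    have := ltn_ord s; nia.
  rewrite -[RHS](eqP (H (Ordinal Hs2))); apply: eq_bigr => i _.
  rewrite hG1 hG2 /=; have [a0 g0] := aL i (ltn_ord i).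
  rewrite aT // exprMn exprD; field.
  by rewrite !expf_neq0.
have H1 : forall s, (s < t.-1 * E)%N ->
    \sum_(i < size L) c`_i * L`_i ^+ s / (L`_i ^+ t.-1 + 1) ^+ E = 0.
  move=> s0 Hs0; rewrite -[RHS](eqP (H (Ordinal Hs0))); apply: eq_bigr => i _.
  by rewrite hG1.
under eq_bigr => i _ do rewrite hG2.
case: (leqP E s) => Es.
  have Hs1 : (s - E < t.-1 * E)%N.
    have := ltn_ord s; nia.
  rewrite -[RHS](H1 _ Hs1); apply: eq_bigr => i _.
  have [a0 g0] := aL i (ltn_ord i).
  rewrite aT // exprMn -{1}(subnK Es) exprD; field.
  by rewrite !expf_neq0.
case: (posnP s) => [s0 | spos].
  set m := (q ^ l.-1).-1.
  have Sh : \sum_(i < size L) c`_i * (L`_i ^+ m / (L`_i ^+ t.-1 + 1)) = 0.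
    have szr : (size ('X^m * G1 F t ^+ E.-1)%R <= t.-1 * E)%N.
      have sz1 : size (G1 F t) = t.
        by rewrite /G1 size_polyDl ?size_polyXn ?size_poly1 ?prednK //; lia.
      apply: leq_trans (size_polyMleq _ _) _.
      have := size_poly_exp_leq (G1 F t) E.-1; rewrite sz1 size_polyXn.
      have hQ : (q ^ l.-1 * q = t)%N by rewrite -expnSr prednK.
      have Q0 : (0 < q ^ l.-1)%N by rewrite expn_gt0 ltnW.
      rewrite /m; move: hQ Q0; rewrite /E; set Q := (q ^ l.-1)%N.
      move=> hQ Q0 hS.
      have QT : (Q < t)%N by rewrite -hQ -{1}(muln1 Q) ltn_pmul2l.
      have eE : (t.-1 * E = t.-1 * E.-1 + t.-1)%N.
        by rewrite -mulnSr prednK.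
      rewrite eE; lia.
    have := @poly_cond F (size L) (t.-1 * E)%N (fun i => c`_i) (fun i => L`_i)
       (fun i => (L`_i ^+ t.-1 + 1) ^+ E) H1 _ szr.
    move=> HH; rewrite -[RHS]HH; apply: eq_bigr => i _.
    have [a0 g0] := aL i (ltn_ord i).
    rewrite hornerM hornerXn horner_exp /G1 hornerD hornerXn hornerC.
    rewrite -[in X in _ = _ / X](prednK E0) exprS; field.
    by rewrite g0 expf_neq0.
  have fs1 := @frob_sum F q (ltnW q1) Hq 1.
  rewrite expn1 in fs1.
  have ->: \sum_(i < size L) c`_i * L`_i ^+ s / (L`_i ^+ t + L`_i) ^+ E
     = \sum_(i < size L) (c`_i * (L`_i ^+ m / (L`_i ^+ t.-1 + 1))
           + (c`_i * (L`_i ^+ m / (L`_i ^+ t.-1 + 1))) ^+ t) ^+ q.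
    apply: eq_bigr => i _.
    have [a0 g0] := aL i (ltn_ord i).
    have fb := @factB F q l _ Hq q1 l1 a0 (at2 _) g0.
    rewrite /= div1r -/t -/E -/m in fb.
    have ct : c`_i ^+ t = c`_i := @fixpow F q _ (cq i (ltn_ord i)) l.
    rewrite s0 expr0 mulr1 -fb [(c`_i * _) ^+ t]exprMn ct -mulrDr.
    by rewrite [(c`_i * _) ^+ q]exprMn (cq i (ltn_ord i)).
  rewrite -fs1 big_split /= -(@frob_sum F q (ltnW q1) Hq l) Sh.
  have e0 : forall n, (0 < n)%N -> (0:F) ^+ n = 0 by case=> // n _; rewrite exprS mul0r.
  by rewrite (e0 _ t0) add0r (e0 _ (ltnW q1)).
have Hj : (E * t.-1 - t * (E - s) < t.-1 * E)%N.
  have X0 : (0 < t * (E - s))%N by rewrite muln_gt0 t0 subn_gt0.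
  have t1 : (1 < t)%N by apply: leq_trans tq.
  have Y0 : (0 < E * t.-1)%N by rewrite muln_gt0 E0 -ltnS prednK.
  rewrite [(t.-1 * E)%N]mulnC; move: X0 Y0.
  set X := (t * (E - s))%N; set Y := (E * t.-1)%N; lia.
have e0 : forall n, (0 < n)%N -> (0:F) ^+ n = 0 by case=> // n _; rewrite exprS mul0r.
apply: (etrans _ (e0 t t0)).
rewrite -[X in _ = X ^+ _](H1 _ Hj) (@frob_sum F q (ltnW q1) Hq l).
apply: eq_bigr => i _.
have [a0 g0] := aL i (ltn_ord i).
rewrite -mulrA -(@factA F q l _ Hq q1 l1 a0 (at2 _) g0 s spos Es).
have ct : c`_i ^+ t = c`_i := @fixpow F q _ (cq i (ltn_ord i)) l.
by rewrite -[in RHS]mulrA [in RHS]exprMn ct.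
Qed.
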